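(* Let $d$ be a weak simulation quasimetric on networks of pTCWS. Then the relation $\mathcal R=\{(M,N) : d(M,N)=0\}$ is a weak probabilistic simulation, i.e. whenever $M\,\mathcal R\,N$ and $M\xrightarrow{\alpha}\Delta$, there exist a weak transition $N\overset{\hat\alpha}{\Longrightarrow}\Theta$ and a matching $\omega\in\Omega(\Delta,\Theta)$ such that $\omega(M',N')>0$ implies $M'\,\mathcal R\,N'$.
   Context: The process calculus pTCWS. Processes $P,Q$ and probabilistic choices $C,D$ are $P ::= \mathsf{nil} \mid {!}\langle u\rangle.C \mid \lfloor ?(x).C\rfloor D \mid \tau.C \mid \sigma.C \mid X \mid \mathsf{fix}\,X.P$ and $C ::= \bigoplus_{i\in I} p_i{:}P_i$ ($I$ finite non-empty, $p_i\in(0,1]$, $\sum_i p_i=1$); in $\mathsf{fix}\,X.P$ every occurrence of $X$ is time-guarded (under a $\sigma$-prefix or in a timeout branch $D$). $1{:}P$ is written $P$; $P\oplus_pQ$ is $p{:}P\oplus(1-p){:}Q$; ${!}\langle v\rangle$ is ${!}\langle v\rangle.\mathsf{nil}$. Networks: $M::=\mathbf 0\mid M_1\mid M_2\mid n[P]^\nu\mid\bot$, where $n[P]^\nu$ is a node named $n$ running closed process $P$ with neighbour set $\nu$, and $\bot$ is a stuck network; $\mathrm{nds}(M)$ is the set of node names. Structural congruence $\equiv$: least equivalence preserved by $\mid$, making $\mid$ a commutative monoid with unit $\mathbf 0$, with $n[\mathsf{fix}\,X.P]^\nu\equiv n[P\{\mathsf{fix}\,X.P/X\}]^\nu$. Networks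 are assumed well-formed (no node is its own neighbour, distinct names, symmetric neighbourhood, connected neighbour graph). $\mathrm{rcv}(P)$ holds iff $n[P]^\nu\equiv n[\lfloor ?(x).C\rfloor D]^\nu$ for some $x,C,D$. Semantics: $\mathcal D(\mathcal N)$ is the set of finite-support probability distributions on networks, $|\Delta|$ the total mass of a sub-distribution, $\overline M$ the Dirac distribution; $[\![n[\bigoplus_i p_i{:}P_i]^\nu]\!]=\sum_ip_i\overline{n[P_i]^\nu}$; $(\Delta\mid\Theta)(M_1\mid M_2)=\Delta(M_1)\Theta(M_2)$. Transitions $M\xrightarrow{\lambda}\Delta$, $\lambda\in\{m!v\triangleright\nu, m?v,\tau,\sigma\}$, form the least relation closed under: (Snd) $m[{!}\langle v\rangle.C]^\nu\xrightarrow{m!v\triangleright\nu}[\![m[C]^\nu]\!]$; (Rcv) if $m\in\nu$: $n[\lfloor ?(x).C\rfloor D]^\nu\xrightarrow{m?v}[\![n[C\{v/x\}]^\nu]\!]$; $\mathbf 0\xrightarrow{m?v}\overline{\mathbf 0}$; (RcvEnb) if $\neg(m\in\nu\wedge\mathrm{rcv}(P))$ and $m\ne n$: $n[P]^\nu\xrightarrow{m?v}\overline{n[P]^\nu}$; (RcvPar) $M\xrightarrow{m?v}\Delta$, $N\xrightarrow{m?v}\Theta$ give $M\mid N\xrightarrow{m?v}\Delta\mid\Theta$; (Bcast) $M\xrightarrow{m!v\triangleright\nu}\Delta$, $N\xrightarrow{m?v}\Theta$ give $M\mid N\xrightarrow{m!v\triangleright(\nu\setminus\mathrm{nds}(N))}\Delta\mid\Theta$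 (and symmetrically); (Tau) $m[\tau.C]^\nu\xrightarrow{\tau}[\![m[C]^\nu]\!]$; (TauPar) $M\xrightarrow{\tau}\Delta$ and $N$ not of the form $\bot\mid N'$ give $M\mid N\xrightarrow{\tau}\Delta\mid\overline N$ (and symmetrically); $\mathbf 0\xrightarrow{\sigma}\overline{\mathbf 0}$; $n[\mathsf{nil}]^\nu\xrightarrow{\sigma}\overline{n[\mathsf{nil}]^\nu}$; (Timeout) $n[\lfloor ?(x).C\rfloor D]^\nu\xrightarrow{\sigma}[\![n[D]^\nu]\!]$; (Sleep) $n[\sigma.C]^\nu\xrightarrow{\sigma}[\![n[C]^\nu]\!]$; ($\sigma$-Par) $M\xrightarrow{\sigma}\Delta$, $N\xrightarrow{\sigma}\Theta$ give $M\mid N\xrightarrow{\sigma}\Delta\mid\Theta$; (Rec) $n[P\{\mathsf{fix}\,X.P/X\}]^\nu\xrightarrow{\lambda}\Delta$ gives $n[\mathsf{fix}\,X.P]^\nu\xrightarrow{\lambda}\Delta$; (ShhSnd) $M\xrightarrow{m!v\triangleright\emptyset}\Delta$ gives $M\xrightarrow{\tau}\Delta$; (ObsSnd) $M\xrightarrow{m!v\triangleright\nu}\Delta$ with $\nu\ne\emptyset$ gives $M\xrightarrow{!v\triangleright\nu}\Delta$. $\bot$ has no transitions. $\alpha$ ranges over $!v\triangleright\nu$, $m?v$, $\sigma$, $\tau$. Weak transitions: $M\xrightarrow{\hat\tau}\Delta$ iff $M\xrightarrow{\tau}\Delta$ or $\Delta=\overline M$; for $\alpha\ne\tau$, $\xrightarrow{\hat\alpha}=\xrightarrow{\alpha}$.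 For $\Delta=\sum_{i\in I}p_i\overline{M_i}$, $\Delta\xrightarrow{\hat\alpha}\Theta$ iff for some non-empty $J\subseteq I$, $M_j\xrightarrow{\hat\alpha}\Theta_j$ ($j\in J$), $M_i$ has no $\hat\alpha$-transition ($i\notin J$), and $\Theta=\sum_{j\in J}p_j\Theta_j$. $\overset{\hat\tau}{\Longrightarrow}$ is the reflexive-transitive closure of $\xrightarrow{\hat\tau}$, and $\overset{\hat\alpha}{\Longrightarrow}=\overset{\hat\tau}{\Longrightarrow}\xrightarrow{\hat\alpha}\overset{\hat\tau}{\Longrightarrow}$ for $\alpha\neq\tau$. A pseudoquasimetric is $d:\mathcal N\times\mathcal N\to[0,1]$ with $d(M,M)=0$ and $d(M,N)\le d(M,O)+d(O,N)$. A matching $\omega\in\Omega(\Delta,\Theta)$ is a distribution on $\mathcal N\times\mathcal N$ with left marginal $\Delta$ and right marginal $\Theta$; $\mathcal K(d)(\Delta,\Theta)=\min_{\omega\in\Omega(\Delta,\Theta)}\sum_{M,N}\omega(M,N)d(M,N)$. A weak simulation quasimetric is a pseudoquasimetric $d$ such that for all $M,N$ with $d(M,N)<1$, whenever $M\xrightarrow{\alpha}\Delta$ there is $\Theta$ with $N\overset{\hat\alpha}{\Longrightarrow}\Theta$ and $\mathcal K(d)(\Delta,\Theta+(1-|\Theta|)\overline\bot)\le d(M,N)$. *)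

(* Defs.v *)
From Stdlib Require Import Reals List Relations ClassicalEpsilon.
Import ListNotations.
Open Scope R_scope.

Set Implicit Arguments.

Definition sum_list {T : Type} (f : T -> R) (s : list T) : R :=
  fold_right (fun x acc => f x + acc) 0 s.

Definition has_sum {T : Type} (f : T -> R) (r : R) : Prop :=
  exists s : list T, NoDup s /\ (forall x, f x <> 0 -> In x s) /\ sum_list f s = r.

Section PTCWS.

Context {V : Type}.

Inductive term : Type :=
| TVal (v : V)
| TVar (x : nat).

(* Processes; a probabilistic choice  (+)_{i in I} p_i : P_i  is the list of
   pairs (p_i, P_i).  Process variables X are natural numbers. *)
Inductive proc : Type :=
| PNil
| PSnd (u : term) (C : list (R * proc))
| PRcv (x : nat) (C : list (R * proc)) (D : list (R * proc))
| PTau (C : list (R * proc))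
| PSig (C : list (R * proc))
| PVar (X : nat)
| PFix (X : nat) (P : proc).

Definition choice := list (R * proc).

Inductive net : Type :=
| NZero
| NPar (M1 M2 : net)
| NNode (n : nat) (P : proc) (nu : list nat)
| NBot.

Fixpoint nds (M : net) : list nat :=
  match M with
  | NZero | NBot => []
  | NPar M1 M2 => nds M1 ++ nds M2
  | NNode n _ _ => [n]
  end.

Fixpoint nodes (M : net) : list (nat * list nat) :=
  match M with
  | NZero | NBot => []
  | NPar M1 M2 => nodes M1 ++ nodes M2
  | NNode n _ nu => [(n, nu)]
  end.

Definition subst_t (x : nat) (v : V) (u : term) : term :=
  match u with
  | TVal w => TVal w
  | TVar y => if Nat.eq_dec y x then TVal v else TVar y
  end.

(* P{v/x}; in |?(y).C|D the variable y binds in C only. *)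
Fixpoint subst_v (x : nat) (v : V) (P : proc) : proc :=
  match P with
  | PNil => PNil
  | PSnd u C => PSnd (subst_t x v u) (map (fun pq => match pq with (p, Q) => (p, subst_v x v Q) end) C)
  | PRcv y C D =>
      PRcv y (if Nat.eq_dec y x then C
              else map (fun pq => match pq with (p, Q) => (p, subst_v x v Q) end) C)
           (map (fun pq => match pq with (p, Q) => (p, subst_v x v Q) end) D)
  | PTau C => PTau (map (fun pq => match pq with (p, Q) => (p, subst_v x v Q) end) C)
  | PSig C => PSig (map (fun pq => match pq with (p, Q) => (p, subst_v x v Q) end) C)
  | PVar X => PVar X
  | PFix X Q => PFix X (subst_v x v Q)
  end.

Definition subst_vc (x : nat) (v : V) (C : choice) : choice :=
  map (fun pq => match pq with (p, Q) => (p, subst_v x v Q) end) C.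

(* P{Q/X} (Q is closed in all uses, so no capture can occur). *)
Fixpoint subst_p (X : nat) (Q : proc) (P : proc) : proc :=
  match P with
  | PNil => PNil
  | PSnd u C => PSnd u (map (fun pq => match pq with (p, P') => (p, subst_p X Q P') end) C)
  | PRcv y C D =>
      PRcv y (map (fun pq => match pq with (p, P') => (p, subst_p X Q P') end) C)
           (map (fun pq => match pq with (p, P') => (p, subst_p X Q P') end) D)
  | PTau C => PTau (map (fun pq => match pq with (p, P') => (p, subst_p X Q P') end) C)
  | PSig C => PSig (map (fun pq => match pq with (p, P') => (p, subst_p X Q P') end) C)
  | PVar Y => if Nat.eq_dec Y X then Q else PVar Y
  | PFix Y P' => if Nat.eq_dec Y X then PFix Y P' else PFix Y (subst_p X Q P')
  end.

(* Every (free) occurrence of X in P is time-guarded: under a sigma-prefix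
   or inside the timeout branch D of a receiver. *)
Fixpoint tguard (X : nat) (P : proc) : Prop :=
  match P with
  | PNil => True
  | PSnd _ C | PTau C =>
      (fix tgc (C : list (R * proc)) : Prop :=
         match C with [] => True | (_, Q) :: C' => tguard X Q /\ tgc C' end) C
  | PRcv _ C _ =>
      (fix tgc (C : list (R * proc)) : Prop :=
         match C with [] => True | (_, Q) :: C' => tguard X Q /\ tgc C' end) C
  | PSig _ => True
  | PVar Y => Y <> X
  | PFix Y Q => if Nat.eq_dec Y X then True else tguard X Q
  end.

Definition choice_ok (C : choice) : Prop :=
  C <> [] /\ Forall (fun pq => 0 < fst pq <= 1) C /\ sum_list fst C = 1.

Fixpoint wf_proc (xs Xs : list nat) (P : proc) : Prop :=
  match P with
  | PNil => True
  | PSnd u C =>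
      (match u with TVal _ => True | TVar x => In x xs end) /\ choice_ok C /\
      (fix wc (C : list (R * proc)) : Prop :=
         match C with [] => True | (_, Q) :: C' => wf_proc xs Xs Q /\ wc C' end) C
  | PRcv x C D =>
      choice_ok C /\ choice_ok D /\
      (fix wc (C : list (R * proc)) : Prop :=
         match C with [] => True | (_, Q) :: C' => wf_proc (x :: xs) Xs Q /\ wc C' end) C /\
      (fix wc (C : list (R * proc)) : Prop :=
         match C with [] => True | (_, Q) :: C' => wf_proc xs Xs Q /\ wc C' end) D
  | PTau C | PSig C =>
      choice_ok C /\
      (fix wc (C : list (R * proc)) : Prop :=
         match C with [] => True | (_, Q) :: C' => wf_proc xs Xs Q /\ wc C' end) C
  | PVar X => In X Xs
  | PFix X Q => tguard X Q /\ wf_proc xs (X :: Xs) Q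
  end.

Definition closed_proc (P : proc) : Prop := wf_proc [] [] P.

Fixpoint procs_ok (M : net) : Prop :=
  match M with
  | NZero | NBot => True
  | NPar M1 M2 => procs_ok M1 /\ procs_ok M2
  | NNode _ P _ => closed_proc P
  end.

Definition nbr_edge (M : net) (a b : nat) : Prop :=
  exists nua, In (a, nua) (nodes M) /\ In b nua /\ In b (nds M).

Definition wf_net (M : net) : Prop :=
  procs_ok M /\
  NoDup (nds M) /\
  (forall n nu, In (n, nu) (nodes M) -> ~ In n nu) /\
  (forall n nun m num, In (n, nun) (nodes M) -> In (m, num) (nodes M) ->
     In m nun -> In n num) /\
  (forall n m, In n (nds M) -> In m (nds M) -> clos_refl_trans nat (nbr_edge M) n m).

Inductive cong : net -> net -> Prop :=
| cong_refl M : cong M M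
| cong_sym M N : cong M N -> cong N M
| cong_trans M N O : cong M N -> cong N O -> cong M O
| cong_par M M' N N' : cong M M' -> cong N N' -> cong (NPar M N) (NPar M' N')
| cong_comm M N : cong (NPar M N) (NPar N M)
| cong_assoc M N O : cong (NPar (NPar M N) O) (NPar M (NPar N O))
| cong_unit M : cong (NPar M NZero) M
| cong_fix n X P nu : cong (NNode n (PFix X P) nu) (NNode n (subst_p X (PFix X P) P) nu).

Definition rcv (n : nat) (nu : list nat) (P : proc) : Prop :=
  exists x C D, cong (NNode n P nu) (NNode n (PRcv x C D) nu).

Definition dist := net -> R.

Definition dirac (M : net) : dist :=
  fun N => if excluded_middle_informative (N = M) then 1 else 0.

Definition sem_node (n : nat) (C : choice) (nu : list nat) : dist :=
  fun N => sum_list (fun pq => fst pq * dirac (NNode n (snd pq) nu) N) C.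

Definition dpar (D T : dist) : dist :=
  fun M => match M with NPar M1 M2 => D M1 * T M2 | _ => 0 end.

Definition is_dist {T : Type} (D : T -> R) : Prop :=
  (forall x, 0 <= D x) /\ has_sum D 1.

(* Neighbour sets in labels are sets of names, represented as predicates. *)
Inductive label : Type :=
| LSnd (m : nat) (v : V) (nu : nat -> Prop)
| LRcv (m : nat) (v : V)
| LTau
| LSig
| LObs (v : V) (nu : nat -> Prop).

Inductive act : Type :=
| AObs (v : V) (nu : nat -> Prop)
| ARcv (m : nat) (v : V)
| ASig
| ATau.

Definition act_label (a : act) : label :=
  match a with
  | AObs v nu => LObs v nu
  | ARcv m v => LRcv m v
  | ASig => LSig
  | ATau => LTau
  end.

Definition setminus_nds (nu : nat -> Prop) (N : net) : nat -> Prop :=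
  fun k => nu k /\ ~ In k (nds N).

Definition bot_par_form (N : net) : Prop := exists N', cong N (NPar NBot N').

Inductive step : net -> label -> dist -> Prop :=
| st_snd m v C nu :
    step (NNode m (PSnd (TVal v) C) nu) (LSnd m v (fun k => In k nu)) (sem_node m C nu)
| st_rcv n m v x C D nu :
    In m nu ->
    step (NNode n (PRcv x C D) nu) (LRcv m v) (sem_node n (subst_vc x v C) nu)
| st_rcv_zero m v : step NZero (LRcv m v) (dirac NZero)
| st_rcv_enb n m v P nu :
    ~ (In m nu /\ rcv n nu P) -> m <> n ->
    step (NNode n P nu) (LRcv m v) (dirac (NNode n P nu))
| st_rcv_par M N m v D T :
    step M (LRcv m v) D -> step N (LRcv m v) T -> step (NPar M N) (LRcv m v) (dpar D T)
| st_bcast_l M N m v nu D T :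
    step M (LSnd m v nu) D -> step N (LRcv m v) T ->
    step (NPar M N) (LSnd m v (setminus_nds nu N)) (dpar D T)
| st_bcast_r M N m v nu D T :
    step M (LSnd m v nu) D -> step N (LRcv m v) T ->
    step (NPar N M) (LSnd m v (setminus_nds nu N)) (dpar T D)
| st_tau m C nu : step (NNode m (PTau C) nu) LTau (sem_node m C nu)
| st_tau_par_l M N D :
    step M LTau D -> ~ bot_par_form N -> step (NPar M N) LTau (dpar D (dirac N))
| st_tau_par_r M N D :
    step M LTau D -> ~ bot_par_form N -> step (NPar N M) LTau (dpar (dirac N) D)
| st_sig_zero : step NZero LSig (dirac NZero)
| st_sig_nil n nu : step (NNode n PNil nu) LSig (dirac (NNode n PNil nu))
| st_timeout n x C D nu : step (NNode n (PRcv x C D) nu) LSig (sem_node n D nu)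
| st_sleep n C nu : step (NNode n (PSig C) nu) LSig (sem_node n C nu)
| st_sig_par M N D T :
    step M LSig D -> step N LSig T -> step (NPar M N) LSig (dpar D T)
| st_rec n X P nu l D :
    step (NNode n (subst_p X (PFix X P) P) nu) l D -> step (NNode n (PFix X P) nu) l D
| st_shh M m v nu D :
    step M (LSnd m v nu) D -> (forall k, ~ nu k) -> step M LTau D
| st_obs M m v nu D :
    step M (LSnd m v nu) D -> (exists k, nu k) -> step M (LObs v nu) D.

Definition hat_step (M : net) (a : act) (T : dist) : Prop :=
  match a with
  | ATau => step M LTau T \/ T = dirac M
  | _ => step M (act_label a) T
  end.

(* Lifting to (sub-)distributions: Delta = sum_i p_i M_i (a finite
   decomposition with p_i > 0); entries (p_i, M_i, Some Theta_i) are the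
   indices in J, with M_i --hat(alpha)--> Theta_i; entries (p_i, M_i, None)
   are indices outside J, M_i having no hat(alpha)-transition; J non-empty;
   Theta = sum_{j in J} p_j Theta_j. *)
Definition lift_step (D : dist) (a : act) (T : dist) : Prop :=
  exists s : list (R * net * option dist),
    (forall p M o, In (p, M, o) s -> 0 < p) /\
    (D = fun N => sum_list (fun e => match e with (p, M, _) => p * dirac M N end) s) /\
    (forall p M T', In (p, M, Some T') s -> hat_step M a T') /\
    (forall p M, In (p, M, None) s -> forall T', ~ hat_step M a T') /\
    (exists p M T', In (p, M, Some T') s) /\
    (T = fun N => sum_list (fun e => match e with
                                     | (p, _, Some T') => p * T' N
                                     | (_, _, None) => 0 end) s).

Definition weak_tau (D T : dist) : Prop :=
  clos_refl_trans dist (fun D1 D2 => lift_step D1 ATau D2) D T.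

Definition weak_step (N : net) (a : act) (T : dist) : Prop :=
  match a with
  | ATau => weak_tau (dirac N) T
  | _ => exists T1 T2, weak_tau (dirac N) T1 /\ lift_step T1 a T2 /\ weak_tau T2 T
  end.

Definition matching (w : net * net -> R) (D T : dist) : Prop :=
  is_dist w /\
  (forall M, has_sum (fun N => w (M, N)) (D M)) /\
  (forall N, has_sum (fun M => w (M, N)) (T N)).

Definition match_cost (d : net -> net -> R) (w : net * net -> R) (c : R) : Prop :=
  has_sum (fun p => w p * d (fst p) (snd p)) c.

Definition Kantorovich (d : net -> net -> R) (D T : dist) (k : R) : Prop :=
  (exists w, matching w D T /\ match_cost d w k) /\
  (forall w c, matching w D T -> match_cost d w c -> k <= c).

Definition pseudoquasimetric (d : net -> net -> R) : Prop :=
  (forall M N, wf_net M -> wf_net N -> 0 <= d M N <= 1) /\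
  (forall M, wf_net M -> d M M = 0) /\
  (forall M N O, wf_net M -> wf_net N -> wf_net O -> d M N <= d M O + d O N).

Definition weak_sim_quasimetric (d : net -> net -> R) : Prop :=
  pseudoquasimetric d /\
  forall M N, wf_net M -> wf_net N -> d M N < 1 ->
    forall a D, step M (act_label a) D ->
      exists T, weak_step N a T /\
        exists r k, has_sum T r /\
          Kantorovich d D (fun X => T X + (1 - r) * dirac NBot X) k /\ k <= d M N.

Definition weak_prob_simulation (Rel : net -> net -> Prop) : Prop :=
  forall M N, Rel M N ->
    forall a D, step M (act_label a) D ->
      exists T, weak_step N a T /\
        exists w, matching w D T /\ (forall M' N', w (M', N') > 0 -> Rel M' N').

End PTCWS.

Arguments net : clear implicits.
Arguments proc : clear implicits.

(* Main.v *)
Require Import Defs.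
From Stdlib Require Import Reals Lra Lia List Permutation Relations ClassicalEpsilon Classical FunctionalExtensionality Wf_nat.
Import ListNotations.
Open Scope R_scope.

Section Sums.
Context {T : Type}.

Definition deq : forall x y : T, {x = y} + {x <> y} :=
  fun x y => excluded_middle_informative (x = y).

Lemma sum_list_cons (f : T -> R) a s : sum_list f (a :: s) = f a + sum_list f s.
Proof. reflexivity. Qed.

Lemma sum_list_app (f : T -> R) s t : sum_list f (s ++ t) = sum_list f s + sum_list f t.
Proof. induction s; simpl; [lra|rewrite IHs; lra]. Qed.

Lemma sum_list_perm (f : T -> R) s t : Permutation s t -> sum_list f s = sum_list f t.
Proof. induction 1; simpl; lra. Qed.

Lemma sum_list_ext {U} (f g : U -> R) s : (forall x, In x s -> f x = g x) -> sum_list f s = sum_list g s.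
Proof. induction s; simpl; intros H; auto. rewrite H, IHs; auto. Qed.

Lemma sum_list_zero {U} (f : U -> R) s : (forall x, In x s -> f x = 0) -> sum_list f s = 0.
Proof. induction s; simpl; intros H; auto. rewrite H, IHs; auto; lra. Qed.

Lemma sum_list_plus {U} (f g : U -> R) s : sum_list (fun x => f x + g x) s = sum_list f s + sum_list g s.
Proof. induction s; simpl; lra. Qed.

Lemma sum_list_scale {U} c (f : U -> R) s : sum_list (fun x => c * f x) s = c * sum_list f s.
Proof. induction s; simpl; rewrite ?IHs; lra. Qed.

Lemma sum_list_nonneg {U} (f : U -> R) s : (forall x, In x s -> 0 <= f x) -> 0 <= sum_list f s.
Proof. induction s; simpl; intros H; [lra|]. pose proof (H a (or_introl eq_refl)). pose proof (IHs (fun x h => H x (or_intror h))). lra. Qed.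

Lemma sum_list_le {U} (f g : U -> R) s : (forall x, In x s -> f x <= g x) -> sum_list f s <= sum_list g s.
Proof. induction s; simpl; intros H; [lra|]. pose proof (H a (or_introl eq_refl)). pose proof (IHs (fun x h => H x (or_intror h))). lra. Qed.

Lemma sum_list_ge_elem {U} (f : U -> R) s x : (forall y, In y s -> 0 <= f y) -> In x s -> f x <= sum_list f s.
Proof. induction s; simpl; intros H Hi; [contradiction|]. destruct Hi as [<-|Hi].
 - pose proof (sum_list_nonneg f s (fun y h => H y (or_intror h))). lra.
 - pose proof (H a (or_introl eq_refl)). pose proof (IHs (fun y h => H y (or_intror h)) Hi). lra. Qed.

Lemma sum_list_nz {U} (f : U -> R) s : sum_list f s <> 0 -> exists x, In x s /\ f x <> 0.
Proof. intros H. destruct (classic (exists x, In x s /\ f x <> 0)) as [|Hn]; auto.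
 exfalso; apply H, sum_list_zero. intros x Hx. apply NNPP; intro; apply Hn; eauto. Qed.

Lemma sum_eq_lists (f : T -> R) s : forall t, NoDup s -> NoDup t ->
  (forall x, f x <> 0 -> (In x s <-> In x t)) -> sum_list f s = sum_list f t.
Proof.
  induction s as [|a s IH]; intros t Hs Ht H; simpl.
  - symmetry; apply sum_list_zero. intros x Hx. apply NNPP; intro Hn. apply H in Hn. apply Hn in Hx. contradiction.
  - inversion Hs; subst. destruct (classic (In a t)) as [Ha|Ha].
    + destruct (in_split _ _ Ha) as (l1 & l2 & ->).
      rewrite <- (sum_list_perm f _ _ (Permutation_middle l1 l2 a)). simpl.
      apply NoDup_remove in Ht as [Ht Hna].
      f_equal. apply IH; auto. intros x Hx. split; intros Hi.
      * assert (In x (a :: s)) as Hi' by (right; auto). apply H in Hi'; auto.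
        apply in_app_or in Hi'; destruct Hi' as [|[->|]]; [apply in_or_app; auto|contradiction|apply in_or_app; auto].
      * assert (x <> a) by (intros ->; contradiction).
        assert (In x (l1 ++ a :: l2)) as Hi'. { apply in_app_or in Hi; apply in_or_app; destruct Hi; [left|right;right]; auto. }
        apply H in Hi'; auto. destruct Hi' as [->|]; [congruence|auto].
    + assert (f a = 0). { apply NNPP; intro Hn. apply H in Hn. apply Ha, Hn; left; auto. }
      rewrite H0, Rplus_0_l. apply IH; auto. intros x Hx. split; intros Hi.
      * apply H; auto; right; auto.
      * apply H in Hi; auto. destruct Hi as [->|]; [congruence|auto].
Qed.

Lemma has_sum_on (f : T -> R) a u : has_sum f a -> NoDup u -> (forall x, f x <> 0 -> In x u) -> sum_list f u = a.
Proof. intros (s & Hs & Hsup & <-) Hu Hsu. symmetry; apply sum_eq_lists; auto. intros x Hx; split; auto. Qed.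

Lemma has_sum_unique (f : T -> R) a b : has_sum f a -> has_sum f b -> a = b.
Proof. intros Ha (s & Hs & Hsup & <-). symmetry; eapply has_sum_on; eauto. Qed.

Lemma has_sum_plus (f g : T -> R) a b : has_sum f a -> has_sum g b -> has_sum (fun x => f x + g x) (a + b).
Proof.
  intros Ha Hb. destruct Ha as (s & Hs & Hsup & Hsa). destruct Hb as (t & Ht & Htup & Htb).
  exists (nodup deq (s ++ t)). split; [apply NoDup_nodup|]. split.
  - intros x Hx. apply nodup_In. apply in_or_app. destruct (classic (f x = 0)); [right; apply Htup; intro; apply Hx; lra|left; auto].
  - rewrite sum_list_plus. f_equal; eapply has_sum_on; eauto. exists s; auto. apply NoDup_nodup.
    intros; apply nodup_In, in_or_app; auto. exists t; auto. apply NoDup_nodup. intros; apply nodup_In, in_or_app; auto.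
Qed.

Lemma has_sum_scale (f : T -> R) a c : has_sum f a -> has_sum (fun x => c * f x) (c * a).
Proof. intros (s & Hs & Hsup & <-). exists s; split; auto. split. intros x Hx; apply Hsup; intro; apply Hx; rewrite H; lra. apply sum_list_scale. Qed.

Lemma has_sum_zero : has_sum (fun _ : T => 0) 0.
Proof. exists []; repeat split; auto. constructor. intros x H; lra. Qed.

Lemma has_sum_ext (f g : T -> R) a : (forall x, f x = g x) -> has_sum f a -> has_sum g a.
Proof. intros E (s & Hs & Hsup & <-). exists s; split; auto. split. intros x Hx; apply Hsup; rewrite E; auto. apply sum_list_ext; auto. Qed.

Lemma has_sum_list {U} (F : U -> T -> R) (c : U -> R) l :
  (forall e, In e l -> has_sum (F e) (c e)) -> has_sum (fun x => sum_list (fun e => F e x) l) (sum_list c l).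
Proof.
  induction l; simpl; intros H. apply has_sum_zero.
  apply has_sum_plus; auto.
Qed.

Lemma has_sum_nonneg_le (f : T -> R) a x : (forall y, 0 <= f y) -> has_sum f a -> f x <= a.
Proof. intros Hn (s & Hs & Hsup & <-). destruct (classic (f x = 0)) as [->|Hx]. apply sum_list_nonneg; auto.
  apply sum_list_ge_elem; auto. Qed.

Lemma has_sum_nonneg_zero (f : T -> R) x : (forall y, 0 <= f y) -> has_sum f 0 -> f x = 0.
Proof. intros Hn Hs. pose proof (has_sum_nonneg_le f 0 x Hn Hs). pose proof (Hn x). lra. Qed.

Lemma has_sum_nz (f : T -> R) a : has_sum f a -> a <> 0 -> exists x, f x <> 0.
Proof. intros (s & Hs & Hsup & <-) H. apply sum_list_nz in H. destruct H as (x & _ & H); eauto. Qed.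

End Sums.
Section Net.
Context {V : Type}.
Notation net := (net V).
Notation proc := (proc V).

Lemma dirac_eq (M : net) : dirac M M = 1.
Proof. unfold dirac. destruct excluded_middle_informative; congruence. Qed.
Lemma dirac_neq (M N : net) : N <> M -> dirac M N = 0.
Proof. unfold dirac. destruct excluded_middle_informative; congruence. Qed.
Lemma dirac_nz (M N : net) : dirac M N <> 0 -> N = M.
Proof. unfold dirac. destruct excluded_middle_informative; congruence. Qed.
Lemma dirac_nonneg (M N : net) : 0 <= dirac M N.
Proof. unfold dirac. destruct excluded_middle_informative; lra. Qed.
Lemma has_sum_dirac (M : net) : has_sum (dirac M) 1.
Proof. exists [M]. split. constructor; [simpl; tauto|constructor]. split.
  intros x Hx; apply dirac_nz in Hx; subst; left; auto. simpl. rewrite dirac_eq; lra. Qed.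

Lemma dpar_nz (D T : net -> R) X : dpar D T X <> 0 -> exists X1 X2, X = NPar X1 X2 /\ D X1 <> 0 /\ T X2 <> 0.
Proof. destruct X; simpl; try congruence. intros H. exists X1, X2; split; auto.
  split; intro E; apply H; rewrite E; ring. Qed.
Lemma dpar_nonneg (D T : net -> R) : (forall x, 0 <= D x) -> (forall x, 0 <= T x) -> forall X, 0 <= dpar D T X.
Proof. intros H1 H2 []; simpl; try lra. apply Rmult_le_pos; auto. Qed.

Lemma has_sum_dpar (D T : net -> R) a b : has_sum D a -> has_sum T b -> has_sum (dpar D T) (a * b).
Proof.
  intros (s & Hs & Hsup & <-) (t & Ht & Htup & <-).
  exists (flat_map (fun x => map (fun y => NPar x y) t) s). split; [|split].
  - clear Hsup Htup. induction s as [|x s IH]; simpl. constructor. inversion Hs; subst.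
    apply NoDup_app.
    + clear -Ht. induction t; simpl; constructor. intros Hi. apply in_map_iff in Hi. destruct Hi as (y & E & Hy). inversion E; subst. inversion Ht; auto.
      inversion Ht; auto.
    + apply IH; auto.
    + intros z Hz Hz'. apply in_map_iff in Hz. destruct Hz as (y & <- & _). apply in_flat_map in Hz'. destruct Hz' as (x' & Hx' & Hi).
      apply in_map_iff in Hi. destruct Hi as (y' & E & _). inversion E; subst. match goal with H : ~ In _ _ |- _ => apply H end; auto.
  - intros X HX. apply dpar_nz in HX. destruct HX as (X1 & X2 & -> & H1 & H2). apply in_flat_map. exists X1; split; auto.
    apply in_map; auto.
  - clear. induction s as [|x s IH]; simpl. ring. rewrite sum_list_app, IH.
    assert (sum_list (dpar D T) (map (fun y => NPar x y) t) = D x * sum_list T t) as ->.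
    { clear. induction t as [|y t IHt]; simpl. ring. rewrite IHt. ring. }
    ring.
Qed.

Lemma sem_node_nz n (C : list (R * proc)) nu X : sem_node n C nu X <> 0 -> exists p Q, In (p, Q) C /\ X = NNode n Q nu.
Proof. unfold sem_node. intros H. apply sum_list_nz in H. destruct H as ([p Q] & Hi & H). simpl in H.
  exists p, Q; split; auto. apply dirac_nz. intro E; apply H; rewrite E; ring. Qed.

Lemma sem_node_ok n (C : list (R * proc)) nu : choice_ok C ->
  (forall X, 0 <= sem_node n C nu X) /\ has_sum (sem_node n C nu) 1.
Proof. intros (_ & Hf & Hs). split.
  - intros X. unfold sem_node. apply sum_list_nonneg. intros [p Q] Hi. rewrite Forall_forall in Hf. apply Hf in Hi. simpl in *.
    apply Rmult_le_pos; [lra|apply dirac_nonneg].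
  - unfold sem_node. rewrite <- Hs. replace (sum_list fst C) with (sum_list (fun pq : R * proc => fst pq * 1) C).
    apply has_sum_list. intros e _. apply has_sum_scale, has_sum_dirac.
    apply sum_list_ext; intros; ring.
Qed.

End Net.
Section Proc.
Context {V : Type}.
Notation proc := (proc V).
Implicit Types (C D : list (R * proc)) (Q P : proc).

Definition allc (f : proc -> Prop) : list (R * proc) -> Prop :=
  fix go (C : list (R * proc)) : Prop := match C with [] => True | (_, Q) :: C' => f Q /\ go C' end.

Lemma allc_iff f C : allc f C <-> Forall (fun pq => f (snd pq)) C.
Proof. induction C as [|[p Q] C IH]; simpl. split; auto. rewrite Forall_cons_iff, IH. simpl. tauto. Qed.

Lemma allc_map f (g : proc -> proc) C :
  allc f (map (fun pq => match pq with (p, Q) => (p, g Q) end) C) <-> allc (fun Q => f (g Q)) C.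
Proof. induction C as [|[p Q] C IH]; simpl. tauto. rewrite IH; tauto. Qed.

Lemma allc_impl (f g : proc -> Prop) C : Forall (fun pq => f (snd pq) -> g (snd pq)) C -> allc f C -> allc g C.
Proof. induction C as [|[p Q] C IH]; simpl; auto. intros H [H1 H2]. inversion H; subst. split; auto. Qed.

Lemma Forall_and2 {A} (P1 P2 : A -> Prop) l : Forall P1 l -> Forall P2 l -> Forall (fun x => P1 x /\ P2 x) l.
Proof. induction 1; intros H2; inversion H2; constructor; auto. Qed.

Lemma choice_ok_map (g : proc -> proc) C : choice_ok C -> choice_ok (map (fun pq => match pq with (p, Q) => (p, g Q) end) C).
Proof. intros (Hne & Hf & Hs). split; [|split].
  - destruct C; simpl; congruence.
  - rewrite Forall_map. eapply Forall_impl; [|exact Hf]. intros [p Q]; simpl; auto.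
  - rewrite <- Hs. clear. induction C as [|[p Q] C IH]; simpl; auto. rewrite IH; auto.
Qed.

Fixpoint proc_ind' (Pr : proc -> Prop) (h1 : Pr PNil)
  (h2 : forall u C, Forall (fun pq => Pr (snd pq)) C -> Pr (PSnd u C))
  (h3 : forall x C D, Forall (fun pq => Pr (snd pq)) C -> Forall (fun pq => Pr (snd pq)) D -> Pr (PRcv x C D))
  (h4 : forall C, Forall (fun pq => Pr (snd pq)) C -> Pr (PTau C))
  (h5 : forall C, Forall (fun pq => Pr (snd pq)) C -> Pr (PSig C))
  (h6 : forall X, Pr (PVar X))
  (h7 : forall X Q, Pr Q -> Pr (PFix X Q)) (P : proc) {struct P} : Pr P :=
  let fix go (C : list (R * proc)) : Forall (fun pq => Pr (snd pq)) C :=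
    match C with
    | [] => Forall_nil _
    | (p, Q) :: C' => @Forall_cons _ (fun pq => Pr (snd pq)) (p, Q) C' (proc_ind' Pr h1 h2 h3 h4 h5 h6 h7 Q) (go C')
    end in
  match P with
  | PNil => h1
  | PSnd u C => h2 u C (go C)
  | PRcv x C D => h3 x C D (go C) (go D)
  | PTau C => h4 C (go C)
  | PSig C => h5 C (go C)
  | PVar X => h6 X
  | PFix X Q => h7 X Q (proc_ind' Pr h1 h2 h3 h4 h5 h6 h7 Q)
  end.

Lemma wf_snd xs Xs u C : wf_proc xs Xs (PSnd u C) =
  ((match u with TVal _ => True | TVar x => In x xs end) /\ choice_ok C /\ allc (wf_proc xs Xs) C).
Proof. reflexivity. Qed.
Lemma wf_rcv xs Xs x C D : wf_proc xs Xs (PRcv x C D) =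
  (choice_ok C /\ choice_ok D /\ allc (wf_proc (x :: xs) Xs) C /\ allc (wf_proc xs Xs) D).
Proof. reflexivity. Qed.
Lemma wf_tau xs Xs C : wf_proc xs Xs (PTau C) = (choice_ok C /\ allc (wf_proc xs Xs) C).
Proof. reflexivity. Qed.
Lemma wf_sig xs Xs C : wf_proc xs Xs (PSig C) = (choice_ok C /\ allc (wf_proc xs Xs) C).
Proof. reflexivity. Qed.
Lemma wf_var xs Xs X : wf_proc xs Xs (@PVar V X) = In X Xs.
Proof. reflexivity. Qed.
Lemma wf_fix xs Xs X Q : wf_proc xs Xs (PFix X Q) = (tguard X Q /\ wf_proc xs (X :: Xs) Q).
Proof. reflexivity. Qed.
Lemma tg_snd Y u C : tguard Y (PSnd u C) = allc (tguard Y) C.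
Proof. reflexivity. Qed.
Lemma tg_rcv Y x C D : tguard Y (PRcv x C D) = allc (tguard Y) C.
Proof. reflexivity. Qed.
Lemma tg_tau Y C : tguard Y (PTau C) = allc (tguard Y) C.
Proof. reflexivity. Qed.

Lemma wf_mono P : forall xs Xs xs' Xs', incl xs xs' -> incl Xs Xs' -> wf_proc xs Xs P -> wf_proc xs' Xs' P.
Proof.
  induction P as [| u C IHC | x C D IHC IHD | C IHC | C IHC | Zv | Zf Pf IHQ] using proc_ind'; intros xs Xs xs' Xs' H1 H2 HH.
  - exact I.
  - rewrite wf_snd in *. destruct HH as (Hu & Hc & Ha). split; [destruct u; auto|split; auto].
    eapply allc_impl; [|exact Ha]. eapply Forall_impl; [|exact IHC]. simpl; intros; eauto.
  - rewrite wf_rcv in *. destruct HH as (Hc & Hd & Ha & Hb). split; auto; split; auto; split.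
    + eapply allc_impl; [|exact Ha]. eapply Forall_impl; [|exact IHC]. simpl; intros pq Hp. apply Hp; auto. apply incl_cons; [left; auto|]. apply incl_tl; auto.
    + eapply allc_impl; [|exact Hb]. eapply Forall_impl; [|exact IHD]. simpl; intros; eauto.
  - rewrite wf_tau in *. destruct HH as (Hc & Ha). split; auto.
    eapply allc_impl; [|exact Ha]. eapply Forall_impl; [|exact IHC]. simpl; intros; eauto.
  - rewrite wf_sig in *. destruct HH as (Hc & Ha). split; auto.
    eapply allc_impl; [|exact Ha]. eapply Forall_impl; [|exact IHC]. simpl; intros; eauto.
  - rewrite wf_var in *; auto.
  - rewrite wf_fix in *. destruct HH as (Ht & Hw). split; auto. eapply IHQ; [exact H1| |exact Hw].
    apply incl_cons; [left; auto|]. apply incl_tl; auto.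
Qed.

Lemma wf_tguard P : forall xs Xs Y, wf_proc xs Xs P -> ~ In Y Xs -> tguard Y P.
Proof.
  induction P as [| u C IHC | x C D IHC IHD | C IHC | C IHC | Zv | Zf Pf IHQ] using proc_ind'; intros xs Xs Y HH Hn.
  - exact I.
  - rewrite wf_snd in HH; rewrite tg_snd. destruct HH as (_ & _ & Ha).
    eapply allc_impl; [|exact Ha]. eapply Forall_impl; [|exact IHC]. simpl; intros; eauto.
  - rewrite wf_rcv in HH; rewrite tg_rcv. destruct HH as (_ & _ & Ha & _).
    eapply allc_impl; [|exact Ha]. eapply Forall_impl; [|exact IHC]. simpl; intros; eauto.
  - rewrite wf_tau in HH; rewrite tg_tau. destruct HH as (_ & Ha).
    eapply allc_impl; [|exact Ha]. eapply Forall_impl; [|exact IHC]. simpl; intros; eauto.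
  - exact I.
  - rewrite wf_var in HH. simpl. intros ->; contradiction.
  - rewrite wf_fix in HH. simpl. destruct Nat.eq_dec; auto. destruct HH as (_ & Hw). eapply IHQ; eauto.
    intros [->|]; auto.
Qed.

Lemma closed_tguard Q Y : closed_proc Q -> tguard Y Q.
Proof. intros HH; eapply wf_tguard; eauto. Qed.

Lemma tguard_subst_p P : forall X Y Q, tguard Y P -> closed_proc Q -> tguard Y (subst_p X Q P).
Proof.
  induction P as [| u C IHC | x C D IHC IHD | C IHC | C IHC | Zv | Zf Pf IHQ] using proc_ind'; intros X Y Q0 HH Hq; simpl subst_p.
  - exact I.
  - rewrite tg_snd in *. rewrite allc_map. eapply allc_impl; [|exact HH]. eapply Forall_impl; [|exact IHC]. simpl; intros; eauto.
  - rewrite tg_rcv in *. rewrite allc_map. eapply allc_impl; [|exact HH]. eapply Forall_impl; [|exact IHC]. simpl; intros; eauto.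
  - rewrite tg_tau in *. rewrite allc_map. eapply allc_impl; [|exact HH]. eapply Forall_impl; [|exact IHC]. simpl; intros; eauto.
  - exact I.
  - destruct Nat.eq_dec; auto. apply closed_tguard; auto.
  - destruct Nat.eq_dec; auto. simpl in *. destruct Nat.eq_dec; auto.
Qed.

Lemma wf_subst_p P : forall xs Xs Xs' X Q, wf_proc xs Xs P -> closed_proc Q ->
  (forall Z, In Z Xs -> Z = X \/ In Z Xs') -> wf_proc xs Xs' (subst_p X Q P).
Proof.
  induction P as [| u C IHC | x C D IHC IHD | C IHC | C IHC | Zv | Zf Pf IHQ] using proc_ind'; intros xs Xs Xs' X Q0 HH Hq HX; simpl subst_p.
  - exact I.
  - rewrite wf_snd in *. destruct HH as (Hu & Hc & Ha). split; auto. split. apply choice_ok_map; auto.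
    rewrite allc_map. eapply allc_impl; [|exact Ha]. eapply Forall_impl; [|exact IHC]. simpl; intros; eauto.
  - rewrite wf_rcv in *. destruct HH as (Hc & Hd & Ha & Hb). split. apply choice_ok_map; auto. split. apply choice_ok_map; auto.
    split; rewrite allc_map.
    + eapply allc_impl; [|exact Ha]. eapply Forall_impl; [|exact IHC]. simpl; intros; eauto.
    + eapply allc_impl; [|exact Hb]. eapply Forall_impl; [|exact IHD]. simpl; intros; eauto.
  - rewrite wf_tau in *. destruct HH as (Hc & Ha). split. apply choice_ok_map; auto.
    rewrite allc_map. eapply allc_impl; [|exact Ha]. eapply Forall_impl; [|exact IHC]. simpl; intros; eauto.
  - rewrite wf_sig in *. destruct HH as (Hc & Ha). split. apply choice_ok_map; auto.
    rewrite allc_map. eapply allc_impl; [|exact Ha]. eapply Forall_impl; [|exact IHC]. simpl; intros; eauto.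
  - rewrite wf_var in HH. destruct Nat.eq_dec.
    + eapply wf_mono; [| |exact Hq]; intros ? [].
    + rewrite wf_var. destruct (HX _ HH); [congruence|auto].
  - rewrite wf_fix in HH. destruct HH as (Ht & Hw). destruct Nat.eq_dec.
    + subst. rewrite wf_fix. split; auto. eapply wf_mono; [apply incl_refl| |exact Hw].
      intros Z [<-|HZ]; [left; auto|]. destruct (HX _ HZ); [left; auto|right; auto].
    + rewrite wf_fix. split. apply tguard_subst_p; auto.
      eapply IHQ; eauto. intros Z [<-|HZ]; [right; left; auto|]. destruct (HX _ HZ); [left; auto|right; right; auto].
Qed.

Lemma closed_unfold X P : closed_proc (PFix X P) -> closed_proc (subst_p X (PFix X P) P).
Proof. intros HH. pose proof HH as HH'. unfold closed_proc in HH. rewrite wf_fix in HH. destruct HH as (_ & Hw).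
  eapply wf_subst_p; eauto. intros Z [<-|[]]; auto. Qed.

Lemma tguard_subst_v P : forall X x v, tguard X P -> tguard X (subst_v x v P).
Proof.
  induction P as [| u C IHC | x C D IHC IHD | C IHC | C IHC | Zv | Zf Pf IHQ] using proc_ind'; intros X x0 v HH; simpl subst_v.
  - exact I.
  - rewrite tg_snd in *. rewrite allc_map. eapply allc_impl; [|exact HH]. eapply Forall_impl; [|exact IHC]. simpl; intros; eauto.
  - rewrite tg_rcv in *. destruct Nat.eq_dec; auto. rewrite allc_map. eapply allc_impl; [|exact HH]. eapply Forall_impl; [|exact IHC]. simpl; intros; eauto.
  - rewrite tg_tau in *. rewrite allc_map. eapply allc_impl; [|exact HH]. eapply Forall_impl; [|exact IHC]. simpl; intros; eauto.
  - exact I.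
  - exact HH.
  - simpl in *. destruct Nat.eq_dec; auto.
Qed.

Lemma wf_subst_v P : forall xs xs' Xs x v, wf_proc xs Xs P ->
  (forall z, In z xs -> z = x \/ In z xs') -> wf_proc xs' Xs (subst_v x v P).
Proof.
  induction P as [| u C IHC | x C D IHC IHD | C IHC | C IHC | Zv | Zf Pf IHQ] using proc_ind'; intros xs xs' Xs x0 v HH Hx; simpl subst_v.
  - exact I.
  - rewrite wf_snd in *. destruct HH as (Hu & Hc & Ha). split; [|split].
    + destruct u; simpl; auto. destruct Nat.eq_dec; auto. destruct (Hx _ Hu); [congruence|auto].
    + apply choice_ok_map; auto.
    + rewrite allc_map. eapply allc_impl; [|exact Ha]. eapply Forall_impl; [|exact IHC]. simpl; intros; eauto.
  - rewrite wf_rcv in *. destruct HH as (Hc & Hd & Ha & Hb). destruct Nat.eq_dec.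
    + subst. split; auto. split. apply choice_ok_map; auto. split.
      * eapply allc_impl; [|exact Ha]. apply Forall_forall. intros pq _ Hw. eapply wf_mono; [| |exact Hw].
        intros z [<-|Hz]; [left; auto|]. destruct (Hx _ Hz); [left; auto|right; auto]. apply incl_refl.
      * rewrite allc_map. eapply allc_impl; [|exact Hb]. eapply Forall_impl; [|exact IHD]. simpl; intros; eauto.
    + split. apply choice_ok_map; auto. split. apply choice_ok_map; auto. split; rewrite allc_map.
      * eapply allc_impl; [|exact Ha]. eapply Forall_impl; [|exact IHC]. simpl; intros pq IH Hw. eapply IH; eauto.
        intros z [<-|Hz]; [right; left; auto|]. destruct (Hx _ Hz); [left; auto|right; right; auto].
      * eapply allc_impl; [|exact Hb]. eapply Forall_impl; [|exact IHD]. simpl; intros; eauto.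
  - rewrite wf_tau in *. destruct HH as (Hc & Ha). split. apply choice_ok_map; auto.
    rewrite allc_map. eapply allc_impl; [|exact Ha]. eapply Forall_impl; [|exact IHC]. simpl; intros; eauto.
  - rewrite wf_sig in *. destruct HH as (Hc & Ha). split. apply choice_ok_map; auto.
    rewrite allc_map. eapply allc_impl; [|exact Ha]. eapply Forall_impl; [|exact IHC]. simpl; intros; eauto.
  - exact HH.
  - rewrite wf_fix in *. destruct HH as (Ht & Hw). split. apply tguard_subst_v; auto. eapply IHQ; eauto.
Qed.

End Proc.
Section SR.
Context {V : Type}.
Notation net := (net V).
Notation proc := (proc V).
Implicit Types (C : list (R * proc)) (Q P : proc) (M N X : net).

Fixpoint nobot (M : net) : Prop :=
  match M with NBot => False | NPar a b => nobot a /\ nobot b | _ => True end.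

Lemma not_nobot_bpf N : ~ nobot N -> bot_par_form N.
Proof.
  induction N; simpl; intros H; try tauto.
  - apply not_and_or in H. destruct H as [H|H].
    + destruct (IHN1 H) as (N' & HN). exists (NPar N' N2).
      eapply cong_trans. apply cong_par. exact HN. apply cong_refl. apply cong_assoc.
    + destruct (IHN2 H) as (N' & HN). exists (NPar N' N1).
      eapply cong_trans. apply cong_comm. eapply cong_trans. apply cong_par. exact HN. apply cong_refl. apply cong_assoc.
  - exists NZero. apply cong_sym, cong_unit.
Qed.

Lemma nbpf_nobot N : ~ bot_par_form N -> nobot N.
Proof. intros H. apply NNPP. intros Hn. apply H, not_nobot_bpf; auto. Qed.

Definition Good (M : net) (D : net -> R) : Prop :=
  (forall x, 0 <= D x) /\ has_sum D 1 /\ (forall x, D x <> 0 -> procs_ok x /\ nodes x = nodes M /\ nobot x).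

Lemma good_dirac M : procs_ok M -> nobot M -> Good M (dirac M).
Proof. intros H1 H2. split; [apply dirac_nonneg|split; [apply has_sum_dirac|]]. intros x Hx; apply dirac_nz in Hx; subst; auto. Qed.

Lemma good_sem n P C nu : choice_ok C -> allc (wf_proc [] []) C -> Good (NNode n P nu) (sem_node n C nu).
Proof. intros Hc Ha. destruct (sem_node_ok n C nu Hc) as [H1 H2]. split; auto; split; auto.
  intros x Hx. apply sem_node_nz in Hx. destruct Hx as (p & Q & Hi & ->). simpl. split; auto.
  apply allc_iff in Ha. rewrite Forall_forall in Ha. apply (Ha _ Hi). Qed.

Lemma good_dpar M N D T : Good M D -> Good N T -> Good (NPar M N) (dpar D T).
Proof. intros (H1 & H2 & H3) (K1 & K2 & K3). split; [apply dpar_nonneg; auto|split].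
  replace 1 with (1 * 1) by ring. apply has_sum_dpar; auto.
  intros x Hx. apply dpar_nz in Hx. destruct Hx as (X1 & X2 & -> & Hx1 & Hx2).
  apply H3 in Hx1; apply K3 in Hx2. simpl. intuition congruence. Qed.

Lemma SR M l Dl : step M l Dl -> procs_ok M -> nobot M /\ Good M Dl.
Proof.
  induction 1; simpl; intros Hp.
  - unfold closed_proc in Hp. rewrite wf_snd in Hp. destruct Hp as (_ & Hc & Ha). split; auto. apply good_sem; auto.
  - unfold closed_proc in Hp. rewrite wf_rcv in Hp. destruct Hp as (Hc & _ & Ha & _). split; auto. apply good_sem.
    apply choice_ok_map; auto. unfold subst_vc. rewrite allc_map. eapply allc_impl; [|exact Ha].
    apply Forall_forall. intros pq _ Hw. eapply wf_subst_v; eauto. intros z [<-|[]]; auto.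
  - split; auto. apply good_dirac; simpl; auto.
  - split; auto. apply good_dirac; simpl; auto.
  - destruct Hp as [Hp1 Hp2]. destruct (IHstep1 Hp1), (IHstep2 Hp2). split; auto. apply good_dpar; auto.
  - destruct Hp as [Hp1 Hp2]. destruct (IHstep1 Hp1), (IHstep2 Hp2). split; auto. apply good_dpar; auto.
  - destruct Hp as [Hp1 Hp2]. destruct (IHstep1 Hp2), (IHstep2 Hp1). split; auto. apply good_dpar; auto.
  - unfold closed_proc in Hp. rewrite wf_tau in Hp. destruct Hp as (Hc & Ha). split; auto. apply good_sem; auto.
  - destruct Hp as [Hp1 Hp2]. destruct (IHstep Hp1). apply nbpf_nobot in H0. split; auto. apply good_dpar; auto. apply good_dirac; auto.
  - destruct Hp as [Hp1 Hp2]. destruct (IHstep Hp2). apply nbpf_nobot in H0. split; auto. apply good_dpar; auto. apply good_dirac; auto.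
  - split; auto. apply good_dirac; simpl; auto.
  - split; auto. apply good_dirac; simpl; auto.
  - unfold closed_proc in Hp. rewrite wf_rcv in Hp. destruct Hp as (_ & Hc & _ & Ha). split; auto. apply good_sem; auto.
  - unfold closed_proc in Hp. rewrite wf_sig in Hp. destruct Hp as (Hc & Ha). split; auto. apply good_sem; auto.
  - destruct Hp as [Hp1 Hp2]. destruct (IHstep1 Hp1), (IHstep2 Hp2). split; auto. apply good_dpar; auto.
  - destruct (IHstep (closed_unfold _ _ Hp)) as [_ (G1 & G2 & G3)]. split; auto. split; auto; split; auto.
  - apply IHstep; auto.
  - apply IHstep; auto.
Qed.

Lemma step_nobot M l Dl : step M l Dl -> nobot M.
Proof. induction 1; simpl; intuition (auto using nbpf_nobot). Qed.

End SR.
Section Weak.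
Context {V : Type}.
Notation net := (net V).
Notation proc := (proc V).
Implicit Types (M N X : net).

Lemma nds_nodes M : nds M = map fst (nodes M).
Proof. induction M; simpl; auto. rewrite map_app; congruence. Qed.

Lemma wf_transfer M X : wf_net M -> procs_ok X -> nodes X = nodes M -> wf_net X.
Proof. intros (H1 & H2 & H3 & H4 & H5) Hp Hn.
  assert (nds X = nds M) as Hd by (rewrite !nds_nodes; congruence).
  assert (nbr_edge X = nbr_edge M) as He by (unfold nbr_edge; rewrite Hd, Hn; auto).
  unfold wf_net. rewrite Hd, Hn, He. auto. Qed.

Lemma wf_bot : wf_net (@NBot V).
Proof. unfold wf_net; simpl. repeat split; try tauto; try constructor. Qed.

Definition Inv (D : net -> R) : Prop :=
  (forall x, 0 <= D x) /\ (forall x, D x <> 0 -> wf_net x) /\ exists m, has_sum D m /\ m <= 1.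

Lemma step_good M l T : wf_net M -> step M l T -> (forall x, 0 <= T x) /\ has_sum T 1 /\ (forall x, T x <> 0 -> wf_net x /\ nobot x).
Proof. intros Hw Hs. destruct (SR _ _ _ Hs (proj1 Hw)) as [_ (G1 & G2 & G3)]. split; auto; split; auto.
  intros x Hx. destruct (G3 x Hx) as (A & B & C). split; auto. eapply wf_transfer; eauto. Qed.

Lemma hat_good M a T : wf_net M -> hat_step M a T -> (forall x, 0 <= T x) /\ has_sum T 1 /\ (forall x, T x <> 0 -> wf_net x).
Proof. intros Hw Hs.
  assert (forall l, step M l T -> (forall x, 0 <= T x) /\ has_sum T 1 /\ (forall x, T x <> 0 -> wf_net x)) as K.
  { intros l Hl. destruct (step_good _ _ _ Hw Hl) as (A & B & C). split; auto; split; auto. intros x Hx; apply C; auto. }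
  destruct a; simpl in Hs; try (eapply K; eauto; fail).
  destruct Hs as [Hs| ->]. eapply K; eauto.
  split; [apply dirac_nonneg|split; [apply has_sum_dirac|]]. intros x Hx; apply dirac_nz in Hx; subst; auto.
Qed.

Lemma lift_entry (s : list (R * net * option (@Defs.dist V))) p M o :
  (forall p M o, In (p, M, o) s -> 0 < p) -> In (p, M, o) s ->
  p <= sum_list (fun e => match e with (p, M0, _) => p * dirac M0 M end) s.
Proof. intros Hpos Hi.
  set (f := fun e : R * net * option (@Defs.dist V) => match e with (p0, M0, _) => p0 * dirac M0 M end).
  assert (f (p, M, o) = p) as Ef by (simpl; rewrite dirac_eq; ring).
  assert (forall y, In y s -> 0 <= f y) as Hnn.
  { intros [[p' M'] o'] Hi'. simpl. apply Rmult_le_pos. apply Rlt_le; eapply Hpos; eauto. apply dirac_nonneg. }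
  pose proof (sum_list_ge_elem f s (p, M, o) Hnn Hi). lra. Qed.

Lemma lift_inv D a T : Inv D -> lift_step D a T -> Inv T.
Proof.
  intros (I1 & I2 & m & Hm & Hm1) (s & Hpos & HD & HS & HN & Hex & HT). subst T.
  assert (Hwf : forall p M o, In (p, M, o) s -> wf_net M).
  { intros p M o Hi. apply I2. pose proof (lift_entry s p M o Hpos Hi). pose proof (Hpos _ _ _ Hi). intro E; rewrite HD in E; cbv beta in E. lra. }
  split; [|split].
  - intros x. apply sum_list_nonneg. intros [[p M] [T'|]] Hi; [|lra]. apply Rmult_le_pos. apply Rlt_le; eapply Hpos; eauto.
    eapply hat_good; eauto.
  - intros x Hx. apply sum_list_nz in Hx. destruct Hx as ([[p M] [T'|]] & Hi & Hx); [|congruence].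
    eapply hat_good; eauto. intro E; apply Hx; rewrite E; ring.
  - exists (sum_list (fun e : R * net * option (@Defs.dist V) => match e with (p, _, Some _) => p * 1 | (_, _, None) => 0 end) s).
    split.
    + apply (has_sum_list (fun (e : R * net * option (@Defs.dist V)) x => match e with (p, _, Some T') => p * T' x | (_, _, None) => 0 end)).
      intros [[p M] [T'|]] Hi. apply has_sum_scale. eapply hat_good; eauto. apply has_sum_zero.
    + assert (has_sum D (sum_list (fun e : R * net * option (@Defs.dist V) => match e with (p, _, _) => p * 1 end) s)) as HD1.
      { rewrite HD. apply (has_sum_list (fun (e : R * net * option (@Defs.dist V)) x => match e with (p, M, _) => p * dirac M x end)).
        intros [[p M] o] _. apply has_sum_scale, has_sum_dirac. }
      pose proof (has_sum_unique _ _ _ Hm HD1). subst m.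
      eapply Rle_trans; [|exact Hm1]. apply sum_list_le. intros [[p M] [T'|]] Hi; [lra|]. pose proof (Hpos _ _ _ Hi); lra.
Qed.

Lemma weak_tau_inv D T : weak_tau D T -> Inv D -> Inv T.
Proof. induction 1; auto. intros; eapply lift_inv; eauto. Qed.

Lemma inv_dirac N : wf_net N -> Inv (dirac N).
Proof. intros Hw. split; [apply dirac_nonneg|split]. intros x Hx; apply dirac_nz in Hx; subst; auto.
  exists 1; split; [apply has_sum_dirac|lra]. Qed.

Lemma weak_step_inv N a T : wf_net N -> weak_step N a T -> Inv T.
Proof. intros Hw. destruct a; simpl.
  all: try (intros (T1 & T2 & H1 & H2 & H3); eapply weak_tau_inv; [exact H3|]; eapply lift_inv; [|exact H2]; eapply weak_tau_inv; [exact H1|]; apply inv_dirac; auto).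
  intros H; eapply weak_tau_inv; [exact H|]; apply inv_dirac; auto.
Qed.

Lemma no_step_bot l D : ~ step (@NBot V) l D.
Proof. intros H. remember NBot as B. induction H; try discriminate; auto. Qed.

Lemma lift_bot a T : lift_step (dirac (@NBot V)) a T -> a = ATau /\ T = dirac NBot.
Proof.
  intros (s & Hpos & HD & HS & HN & Hex & HT).
  assert (Hb : forall p M o, In (p, M, o) s -> M = NBot).
  { intros p M o Hi. pose proof (lift_entry s p M o Hpos Hi). pose proof (Hpos _ _ _ Hi).
    pose proof (f_equal (fun f => f M) HD) as E. simpl in E. rewrite <- E in H. apply dirac_nz. lra. }
  destruct Hex as (p & M & T' & Hi). pose proof (HS _ _ _ Hi) as Hs. rewrite (Hb _ _ _ Hi) in Hs.
  destruct a; simpl in Hs; try (exfalso; eapply no_step_bot; eauto; fail). split; auto.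
  assert (Hsome : forall p M o, In (p, M, o) s -> exists T0, o = Some T0 /\ T0 = dirac NBot).
  { intros p0 M0 [T0|] Hi0; pose proof (Hb _ _ _ Hi0); subst M0.
    - exists T0; split; auto. pose proof (HS _ _ _ Hi0) as Hh; simpl in Hh; destruct Hh as [Hst|]; auto. exfalso; eapply no_step_bot; eauto.
    - exfalso. apply (HN _ _ Hi0 (dirac NBot)). simpl; auto. }
  subst T. apply functional_extensionality. intros x.
  transitivity (sum_list (fun e : R * net * option (@Defs.dist V) => match e with (p, M, _) => p * dirac M x end) s).
  - apply sum_list_ext. intros [[p0 M0] o0] Hi0. destruct (Hsome _ _ _ Hi0) as (T0 & -> & ->). rewrite (Hb _ _ _ Hi0); auto.
  - rewrite HD; auto.
Qed.

Lemma weak_tau_bot D T : weak_tau D T -> D = dirac (@NBot V) -> T = dirac NBot.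
Proof. induction 1; intros E; subst; auto. eapply lift_bot; eauto. Qed.

Lemma weak_step_bot a T : weak_step (@NBot V) a T -> a = ATau /\ T = dirac NBot.
Proof. destruct a; simpl.
  all: try (intros (T1 & T2 & H1 & H2 & H3); apply weak_tau_bot in H1; auto; subst; apply lift_bot in H2; destruct H2; discriminate).
  intros H; split; auto; eapply weak_tau_bot; eauto. Qed.

End Weak.
Section Measure.
Context {V : Type}.
Notation net := (net V).
Notation proc := (proc V).
Implicit Types (M N : net) (P Q : proc).

Fixpoint td (P : proc) : nat :=
  match P with
  | PTau C => S ((fix mx (C : list (R * proc)) : nat :=
                    match C with [] => 0%nat | (_, Q) :: C' => Nat.max (td Q) (mx C') end) C)
  | PFix _ Q => td Q
  | _ => 0%nat
  end.

Fixpoint fd (P : proc) : nat :=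
  match P with PFix _ Q => S (fd Q) | _ => 0%nat end.

Fixpoint mu (M : net) : nat :=
  match M with NNode _ P _ => td P | NPar a b => (mu a + mu b)%nat | _ => 0%nat end.

Lemma td_tau_lt C p Q : In (p, Q) C -> (td Q < td (PTau C))%nat.
Proof. induction C as [|[p' Q'] C IH]; simpl; intros H; [contradiction|].
  destruct H as [E|H]. inversion E; subst; lia. specialize (IH H). simpl in IH. lia. Qed.

Lemma td_subst P : forall X Q, tguard X P -> td (subst_p X Q P) = td P.
Proof.
  induction P as [| u C IHC | x C D IHC IHD | C IHC | C IHC | Zv | Zf Pf IHQ] using proc_ind'; intros X Q0 H; simpl subst_p; auto.
  - rewrite tg_tau in H. simpl. f_equal. induction C as [|[p Q] C IH]; simpl; auto.
    apply Forall_cons_iff in IHC as [IQ IC]. destruct H as [Ha Hb]. simpl in IQ. rewrite IQ by auto. rewrite IH; auto.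
  - simpl in H. destruct Nat.eq_dec; [congruence|auto].
  - simpl in H. destruct (Nat.eq_dec Zf X); simpl; auto.
Qed.

Lemma fd_subst P : forall X Q, tguard X P -> fd (subst_p X Q P) = fd P.
Proof.
  induction P as [| u C IHC | x C D IHC IHD | C IHC | C IHC | Zv | Zf Pf IHQ] using proc_ind'; intros X Q0 H; simpl subst_p; auto.
  - simpl in H. destruct Nat.eq_dec; [congruence|auto].
  - simpl in H. destruct (Nat.eq_dec Zf X); simpl; auto.
Qed.

Lemma node_prog (Hv : V -> False) k : forall P n nu, (fd P < k)%nat -> closed_proc P ->
  (exists D, step (NNode n P nu) LSig D) \/
  (exists D, step (NNode n P nu) LTau D /\ forall Y, D Y <> 0 -> (mu Y < td P)%nat).
Proof.
  induction k; intros P n nu Hk Hc; [lia|].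
  destruct P as [| u C | x C D | C | C | Z | Z Q].
  - left. eexists; apply st_sig_nil.
  - exfalso. unfold closed_proc in Hc. rewrite wf_snd in Hc. destruct u; [auto|]. destruct Hc as [[] _].
  - left. eexists; apply st_timeout.
  - right. eexists; split; [apply st_tau|]. intros Y HY. apply sem_node_nz in HY. destruct HY as (p & Q & Hi & ->). simpl.
    eapply td_tau_lt; eauto.
  - left. eexists; apply st_sleep.
  - exfalso. unfold closed_proc in Hc. rewrite wf_var in Hc. destruct Hc.
  - pose proof Hc as Hc'. unfold closed_proc in Hc'. rewrite wf_fix in Hc'. destruct Hc' as [Ht _].
    assert (fd (subst_p Z (PFix Z Q) Q) < k)%nat by (rewrite fd_subst by auto; simpl in Hk; lia).
    destruct (IHk _ n nu H (closed_unfold _ _ Hc)) as [(D & HD)|(D & HD & Hm)].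
    + left. exists D. apply st_rec; auto.
    + right. exists D. split. apply st_rec; auto. rewrite td_subst in Hm by auto. simpl. auto.
Qed.

Lemma cong_nobot M N : cong M N -> (nobot M <-> nobot N).
Proof. induction 1; simpl; tauto. Qed.

Lemma nobot_nbpf M : nobot M -> ~ bot_par_form M.
Proof. intros H (N' & HN). apply cong_nobot in HN. simpl in HN. tauto. Qed.

Lemma net_prog (Hv : V -> False) X : nobot X -> procs_ok X ->
  (exists D, step X LSig D) \/ (exists D, step X LTau D /\ forall Y, D Y <> 0 -> (mu Y < mu X)%nat).
Proof.
  induction X; simpl; intros Hb Hp.
  - left. eexists; apply st_sig_zero.
  - destruct Hb as [Hb1 Hb2]. destruct Hp as [Hp1 Hp2].
    assert (~ bot_par_form X1) as N1 by (apply nobot_nbpf; auto).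
    assert (~ bot_par_form X2) as N2 by (apply nobot_nbpf; auto).
    destruct (IHX1 Hb1 Hp1) as [(D1 & H1)|(D1 & H1 & K1)].
    + destruct (IHX2 Hb2 Hp2) as [(D2 & H2)|(D2 & H2 & K2)].
      * left. eexists; apply st_sig_par; eauto.
      * right. eexists; split. apply st_tau_par_r; eauto. intros Y HY. apply dpar_nz in HY.
        destruct HY as (Y1 & Y2 & -> & HY1 & HY2). apply dirac_nz in HY1; subst. simpl. specialize (K2 _ HY2). lia.
    + right. eexists; split. apply st_tau_par_l; eauto. intros Y HY. apply dpar_nz in HY.
      destruct HY as (Y1 & Y2 & -> & HY1 & HY2). apply dirac_nz in HY2; subst. simpl. specialize (K1 _ HY1). lia.
  - eapply node_prog; eauto.
  - contradiction.
Qed.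

End Measure.
Section Main.
Context {V : Type}.
Notation net := (net V).
Notation proc := (proc V).

Lemma match_supp (w : net * net -> R) D T X Y : matching w D T -> w (X, Y) <> 0 -> D X <> 0 /\ T Y <> 0.
Proof. intros ((Hn & _) & HL & HR) Hw. split; intro E.
  - pose proof (HL X) as H. rewrite E in H. apply Hw. apply (has_sum_nonneg_zero (fun N => w (X, N))); auto.
  - pose proof (HR Y) as H. rewrite E in H. apply Hw. apply (has_sum_nonneg_zero (fun M => w (M, Y))); auto.
Qed.

Lemma cost_zero (d : net -> net -> R) w D T k : pseudoquasimetric d -> matching w D T -> match_cost d w k -> k <= 0 ->
  (forall x, D x <> 0 -> wf_net x) -> (forall y, T y <> 0 -> wf_net y) ->
  forall X Y, w (X, Y) > 0 -> wf_net X /\ wf_net Y /\ d X Y = 0.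
Proof.
  intros (Hd & _ & _) Hm Hc Hk HD HT X Y Hw.
  assert (Hwf : forall X Y, w (X, Y) <> 0 -> wf_net X /\ wf_net Y).
  { intros X0 Y0 H. destruct (match_supp _ _ _ _ _ Hm H). auto. }
  destruct Hm as ((Hn & _) & _).
  assert (Hg : forall p : net * net, 0 <= w p * d (fst p) (snd p)).
  { intros [X0 Y0]. simpl. destruct (Rle_lt_or_eq_dec _ _ (Hn (X0, Y0))) as [H|H].
    - destruct (Hwf X0 Y0) as [A B]. lra. apply Rmult_le_pos. lra. apply Hd; auto.
    - rewrite <- H; lra. }
  destruct (Hwf X Y) as [A B]. lra. split; auto; split; auto.
  pose proof (has_sum_nonneg_le _ _ (X, Y) Hg Hc). pose proof (Hg (X, Y)). simpl in *.
  assert (w (X, Y) * d X Y = 0) as E by lra. apply Rmult_integral in E. destruct E; [lra|auto].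
Qed.

Lemma in_le_sum x l : In x l -> (x <= list_sum l)%nat.
Proof. induction l; simpl; intros H; [contradiction|]. destruct H as [->|H]; [lia|]. specialize (IHl H); lia. Qed.

Lemma rcv_fresh (v : V) m X : nobot X -> (forall n nu, In (n, nu) (nodes X) -> ~ In m nu /\ m <> n) ->
  exists D, step X (LRcv m v) D.
Proof.
  induction X; simpl; intros Hb Hf.
  - eexists; apply st_rcv_zero.
  - destruct Hb as [B1 B2].
    destruct IHX1 as (D1 & H1); auto. intros n nu Hi; apply Hf, in_or_app; auto.
    destruct IHX2 as (D2 & H2); auto. intros n0 nu Hi; apply Hf, in_or_app; auto.
    eexists; apply st_rcv_par; eauto.
  - destruct (Hf n nu (or_introl eq_refl)) as [A B]. eexists; apply st_rcv_enb; auto. tauto.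
  - contradiction.
Qed.

Lemma fresh_exists (X : net) : exists m, forall n nu, In (n, nu) (nodes X) -> ~ In m nu /\ m <> n.
Proof.
  exists (S (list_sum (map (fun p : nat * list nat => (fst p + list_sum (snd p))%nat) (nodes X)))).
  intros n nu Hi. pose proof (in_le_sum _ _ (in_map (fun p : nat * list nat => (fst p + list_sum (snd p))%nat) _ _ Hi)) as H.
  simpl in H. split.
  - intros Hm. pose proof (in_le_sum _ _ Hm). lia.
  - lia.
Qed.

Lemma E_bot (d : net -> net -> R) : weak_sim_quasimetric d ->
  forall X, wf_net X -> nobot X -> d X NBot = 0 -> False.
Proof.
  intros [Hpq Hsim]. destruct (classic (inhabited V)) as [[v]|Hv].
  - intros X Hw Hb Hd. destruct (fresh_exists X) as (m & Hm). destruct (rcv_fresh v m X Hb Hm) as (D & HD).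
    destruct (Hsim X NBot Hw wf_bot ltac:(lra) (ARcv m v) D HD) as (T & HT & _).
    apply weak_step_bot in HT. destruct HT; discriminate.
  - assert (Hv' : V -> False) by (intros v; apply Hv; constructor; auto).
    intros X. remember (mu X) as k. revert X Heqk. induction k as [k IH] using lt_wf_ind.
    intros X -> Hw Hb Hd. destruct (net_prog Hv' X Hb (proj1 Hw)) as [(D & HD)|(D & HD & Hmu)].
    + destruct (Hsim X NBot Hw wf_bot ltac:(lra) ASig D HD) as (T & HT & _).
      apply weak_step_bot in HT. destruct HT; discriminate.
    + destruct (Hsim X NBot Hw wf_bot ltac:(lra) ATau D HD) as (T & HT & r & k0 & Hr & ((w & Hm & Hc) & _) & Hk).
      apply weak_step_bot in HT. destruct HT as [_ ->].
      pose proof (has_sum_unique _ _ _ Hr (has_sum_dirac NBot)) as ->.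
      destruct (step_good _ _ _ Hw HD) as (G1 & G2 & G3).
      assert (HT' : forall y : net, dirac NBot y + (1 - 1) * dirac NBot y <> 0 -> y = NBot).
      { intros y Hy. apply dirac_nz. intro E; apply Hy; rewrite E; ring. }
      destruct Hm as ((Hn & Hs1) & HL & HR) eqn:Hm'. clear Hm'.
      assert (Hmatch : matching w D (fun X : net => dirac NBot X + (1 - 1) * dirac NBot X)) by (split; auto; split; auto).
      destruct (has_sum_nz _ _ Hs1 ltac:(lra)) as ([X' Y'] & Hw').
      assert (w (X', Y') > 0) as Hpos by (pose proof (Hn (X', Y')); lra).
      destruct (match_supp _ _ _ _ _ Hmatch Hw') as [HX HY].
      apply HT' in HY. subst Y'.
      destruct (cost_zero d w D _ k0 Hpq Hmatch Hc ltac:(lra)) with (X := X') (Y := @NBot V) as (A & _ & C); auto.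
      * intros x Hx; apply G3; auto.
      * intros y Hy; apply HT' in Hy; subst; apply wf_bot.
      * destruct (G3 _ HX) as [_ Hb']. eapply (IH (mu X')); eauto.
Qed.

End Main.

Theorem proposition2p7 (V : Type) (d : net V -> net V -> R) :
  weak_sim_quasimetric d ->
  weak_prob_simulation (fun M N => wf_net M /\ wf_net N /\ d M N = 0).
Proof.
  intros Hwq. pose proof Hwq as [Hpq Hsim].
  intros M N (HwM & HwN & Hd) a D HD.
  destruct (Hsim M N HwM HwN ltac:(lra) a D HD) as (T & HT & r & k & Hr & ((w & Hm & Hc) & _) & Hk).
  rewrite Hd in Hk.
  destruct (weak_step_inv _ _ _ HwN HT) as (I1 & I2 & m & Hm0 & Hm1).
  pose proof (has_sum_unique _ _ _ Hr Hm0) as <-.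
  destruct (step_good _ _ _ HwM HD) as (G1 & G2 & G3).
  assert (HT'w : forall y, T y + (1 - r) * dirac NBot y <> 0 -> wf_net y).
  { intros y Hy. destruct (classic (T y = 0)) as [E|E]; auto.
    rewrite E in Hy. assert (dirac NBot y <> 0) by (intro E'; apply Hy; rewrite E'; ring).
    apply dirac_nz in H; subst; apply wf_bot. }
  assert (r = 1) as Er.
  { destruct (Rle_lt_or_eq_dec _ _ Hm1) as [Hlt|]; auto. exfalso.
    destruct Hm as ((Hn & Hs1) & HL & HR) eqn:Hm'. clear Hm'.
    pose proof (HR NBot) as H. rewrite dirac_eq in H.
    destruct (has_sum_nz _ _ H) as (X' & HX').
    { pose proof (I1 NBot). lra. }
    assert (w (X', NBot) > 0) as Hpos by (pose proof (Hn (X', NBot)); lra).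
    destruct (match_supp _ _ _ _ _ Hm HX') as [HX _].
    destruct (cost_zero d w D _ k Hpq Hm Hc Hk) with (X := X') (Y := @NBot V) as (A & _ & C); auto.
    - intros x Hx; apply G3; auto.
    - destruct (G3 _ HX) as [_ Hb']. eapply (E_bot d Hwq X'); eauto. }
  subst r.
  assert (ET : (fun X => T X + (1 - 1) * dirac NBot X) = T).
  { apply functional_extensionality; intros; ring. }
  rewrite ET in Hm.
  exists T. split; auto. exists w. split; auto.
  intros M' N' Hpos. eapply cost_zero; eauto.
  intros x Hx; apply G3; auto.
Qed.
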